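(* Let $K\subset\mathbb{R}^n$ be a convex body and $c\in\mathbb{R}^n$ such that $c+r(K)\mathbb{B}$ is an inball and $\mathbb{B}$ is the circumball of $K$. Let $k\in\{2,\dots,n+1\}$ and $p^1,\dots,p^k\in K\cap\mathbb{S}$ with $0\in\mathrm{conv}\{p^1,\dots,p^k\}$, and set $T':=\mathrm{conv}\{p^1,\dots,p^k\}$ and $C:=\mathrm{conv}\big(T'\cup(c+r(K)\mathbb{B})\big)$. Then \[ D(C)=\max\{D(T'),\ \|p^i-c\|+r(C)\ :\ i\in[k]\}. \]
   Context: $\mathbb{B}$, $\mathbb{S}$ are the Euclidean unit ball and sphere; $r(\cdot)$ is the inradius (radius of a largest contained ball), $D(\cdot)$ the diameter. The circumball is the smallest ball containing $K$; an inball is a largest ball contained in $K$. $[k]=\{1,\dots,k\}$. *)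

(* Defs.v *)
From HB Require Import structures.
From mathcomp Require Import all_boot all_order all_algebra.
From mathcomp Require Import boolp classical_sets reals.
Set Implicit Arguments. Unset Strict Implicit. Unset Printing Implicit Defensive.
Import Order.TTheory GRing.Theory Num.Theory.
Local Open Scope ring_scope.
Local Open Scope classical_set_scope.

Section Defs.
Variables (R : realType) (n : nat).
Notation vec := 'rV[R]_n.

Definition edot (x y : vec) : R := \sum_(i < n) x 0 i * y 0 i.
Definition enorm (x : vec) : R := Num.sqrt (edot x x).

Definition cball (c : vec) (rho : R) : set vec := [set x | enorm (x - c) <= rho].
Definition usphere : set vec := [set x | enorm x = 1].

Definition convex_set (A : set vec) : Prop :=
  forall x y (t : R), A x -> A y -> 0 <= t -> t <= 1 -> A (t *: x + (1 - t) *: y).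

Definition eclosed (A : set vec) : Prop :=
  forall x, (forall e : R, 0 < e -> exists2 y, A y & enorm (x - y) < e) -> A x.
Definition ebounded (A : set vec) : Prop := exists M : R, forall x, A x -> enorm x <= M.

(* convex body: compact convex set with nonempty interior *)
Definition convex_body (K : set vec) : Prop :=
  [/\ convex_set K, eclosed K, ebounded K &
      exists c (rho : R), 0 < rho /\ cball c rho `<=` K].

Definition conv (A : set vec) : set vec :=
  [set x | exists m (q : 'I_m -> vec) (l : 'I_m -> R),
     [/\ forall i, A (q i), forall i, 0 <= l i, \sum_(i < m) l i = 1 &
         x = \sum_(i < m) l i *: q i]].

Definition inradius (A : set vec) : R :=
  sup [set rho : R | 0 <= rho /\ exists c, cball c rho `<=` A].

Definition diam (A : set vec) : R :=
  sup [set d : R | exists x y, [/\ A x, A y & d = enorm (x - y)]].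

Definition is_inball (K : set vec) (c : vec) (rho : R) : Prop :=
  rho = inradius K /\ cball c rho `<=` K.

Definition is_circumball (K : set vec) (c : vec) (rho : R) : Prop :=
  K `<=` cball c rho /\ forall c' (rho' : R), K `<=` cball c' rho' -> rho <= rho'.

End Defs.

(* Main.v *)
Require Import Defs.
From HB Require Import structures.
From mathcomp Require Import all_boot all_order all_algebra.
From mathcomp Require Import boolp classical_sets reals.
From mathcomp Require Import lra.
Import Order.TTheory GRing.Theory Num.Theory.
Local Open Scope ring_scope.
Local Open Scope classical_set_scope.

Set Implicit Arguments.
Section Norm.
Context {R : realType} {n : nat}.
Notation vec := 'rV[R]_n.
Implicit Types x y z : vec.

Lemma edotC x y : edot x y = edot y x.
Proof. by apply: eq_bigr => i _; rewrite mulrC. Qed.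
Lemma edotDl x y z : edot (x + y) z = edot x z + edot y z.
Proof. by rewrite /edot -big_split; apply: eq_bigr => i _; rewrite mxE mulrDl. Qed.
Lemma edotZl a x y : edot (a *: x) y = a * edot x y.
Proof. by rewrite /edot mulr_sumr; apply: eq_bigr => i _; rewrite mxE mulrA. Qed.
Lemma edotNl x y : edot (- x) y = - edot x y.
Proof. by rewrite -scaleN1r edotZl mulN1r. Qed.
Lemma edotDr x y z : edot z (x + y) = edot z x + edot z y.
Proof. by rewrite edotC edotDl !(edotC z). Qed.
Lemma edotZr a x y : edot y (a *: x) = a * edot y x.
Proof. by rewrite edotC edotZl edotC. Qed.
Lemma edot_ge0 x : 0 <= edot x x.
Proof. by apply: sumr_ge0 => i _; rewrite -expr2 sqr_ge0. Qed.
Lemma enorm_ge0 x : 0 <= enorm x.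
Proof. exact: sqrtr_ge0. Qed.
Lemma enorm_sq x : enorm x ^+ 2 = edot x x.
Proof. by rewrite sqr_sqrtr // edot_ge0. Qed.

Lemma edot0_eq x : edot x x = 0 -> x = 0.
Proof.
move=> /eqP; rewrite psumr_eq0 => [/allP H|i _]; last by rewrite -expr2 sqr_ge0.
apply/rowP => i; rewrite mxE.
have := H i (mem_index_enum _); rewrite implyTb -expr2 sqrf_eq0.
by move/eqP.
Qed.

Lemma CS x y : edot x y <= enorm x * enorm y.
Proof.
set a := edot x x; set b := edot x y; set c := edot y y.
have hc : 0 <= c by apply: edot_ge0.
have ha : 0 <= a by apply: edot_ge0.
have key : b ^+ 2 <= a * c.
  have [c0|cpos] := eqVneq c 0.
    have y0 : y = 0 by apply: edot0_eq.
    by rewrite /b y0 -(scale0r 0) edotZr mul0r expr0n /= mulr_ge0.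
  have cp : 0 < c by rewrite lt_def cpos hc.
  have := edot_ge0 (c *: x - b *: y).
  rewrite !(edotDl, edotDr, edotNl, edotZl, edotZr) -/a -/b -/c.
  rewrite -!scaleNr !(edotZl, edotZr) -/a -/b -/c.
  rewrite (edotC y x) -/b => H.
  have : 0 <= c * (a * c - b ^+ 2) by nra.
  by rewrite pmulr_rge0 // subr_ge0.
have : `|b| <= enorm x * enorm y.
  rewrite /enorm -sqrtrM // -/a -/c -sqrtr_sqr ler_sqrt //; exact: mulr_ge0.
by apply: le_trans; apply: ler_norm.
Qed.

Lemma enormD x y : enorm (x + y) <= enorm x + enorm y.
Proof.
rewrite /enorm -[X in _ <= X]ger0_norm ?addr_ge0 ?sqrtr_ge0 //.
rewrite -sqrtr_sqr ler_sqrt ?sqr_ge0 //.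
have := CS x y; rewrite /enorm => H.
rewrite edotDl !edotDr (edotC y x) sqrrD !sqr_sqrtr ?edot_ge0 //; lra.
Qed.

Lemma enormZ a x : enorm (a *: x) = `|a| * enorm x.
Proof. by rewrite /enorm edotZl edotZr mulrA -expr2 sqrtrM ?sqr_ge0 // sqrtr_sqr. Qed.

Lemma enorm0 : enorm (0 : vec) = 0.
Proof. by rewrite -(scale0r 0) enormZ normr0 mul0r. Qed.

Lemma enormN x : enorm (- x) = enorm x.
Proof. by rewrite -scaleN1r enormZ normrN1 mul1r. Qed.

Lemma enormB x y : enorm (x - y) = enorm (y - x).
Proof. by rewrite -enormN opprB. Qed.

Lemma enorm_sum m (l : 'I_m -> R) (q : 'I_m -> vec) : (forall i, 0 <= l i) ->
  enorm (\sum_(i < m) l i *: q i) <= \sum_(i < m) l i * enorm (q i).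
Proof.
move=> l0; apply: (big_rec2 (fun v s => enorm v <= s)); first by rewrite enorm0.
move=> i v s _ H; apply: le_trans (enormD _ _) _.
by rewrite enormZ ger0_norm // lerD2l.
Qed.
End Norm.

Set Implicit Arguments.
Section Conv.
Context {R : realType} {n : nat}.
Notation vec := 'rV[R]_n.
Implicit Types x y z : vec.

Lemma sub_conv (A : set vec) : A `<=` conv A.
Proof.
move=> x Ax; exists 1%N, (fun _ => x), (fun _ => 1); split => //.
  by rewrite big_ord1.
by rewrite big_ord1 scale1r.
Qed.

Lemma conv_sub (A : set vec) : convex_set A -> conv A `<=` A.
Proof.
move=> cA x [m [q [l [Aq l0 l1 ->]]]]; elim: m q l Aq l0 l1 => [|m IH] q l Aq l0 l1.
  by move: l1; rewrite big_ord0 => /eqP; rewrite eq_sym oner_eq0.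
rewrite big_ord_recr /=; move: l1; rewrite big_ord_recr /=.
set s := \sum_(i < m) _; set t := l ord_max => st.
have s0 : 0 <= s by apply: sumr_ge0.
have [s_eq0|s_ne0] := eqVneq s 0.
  have l0' : forall i : 'I_m, l (widen_ord (leqnSn m) i) = 0.
    move=> i; move/eqP: s_eq0; rewrite psumr_eq0 // => /allP H.
    by apply/eqP; move: (H i (mem_index_enum _)); rewrite implyTb.
  rewrite big1 ?add0r; last by move=> i _; rewrite l0' scale0r.
  have -> : t = 1 by rewrite -st s_eq0 add0r.
  by rewrite scale1r.
have sp : 0 < s by rewrite lt_def s_ne0 s0.
set y := \sum_(i < m) _.
have -> : y = s *: \sum_(i < m) (l (widen_ord (leqnSn m) i) / s) *: q (widen_ord (leqnSn m) i).
  rewrite scaler_sumr; apply: eq_bigr => i _; rewrite scalerA mulrCA mulfV ?mulr1 //.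
have -> : t = 1 - s by lra.
apply: cA => //.
- apply: IH => // [i|]; first by rewrite divr_ge0.
  by rewrite -mulr_suml mulfV.
- by rewrite -st lerDl; apply: l0.
Qed.

Lemma conv_bound (A : set vec) y B : (forall a, A a -> enorm (a - y) <= B) ->
  forall x, conv A x -> enorm (x - y) <= B.
Proof.
move=> H x [m [q [l [Aq l0 l1 ->]]]].
have -> : \sum_(i < m) l i *: q i - y = \sum_(i < m) l i *: (q i - y).
  rewrite -[y in LHS]scale1r -l1 scaler_suml -sumrB.
  by apply: eq_bigr => i _; rewrite scalerBr.
apply: le_trans (enorm_sum _ _ l0) _.
rewrite -[B]mul1r -l1 mulr_suml; apply: ler_sum => i _.
by apply: ler_wpM2l => //; apply: H.
Qed.

Lemma sup_ge (E : set R) (x M : R) : E x -> (forall y : R, E y -> y <= M) -> x <= sup E.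
Proof.
move=> Ex HM; apply: sup_upper_bound => //; split; first by exists x.
by exists M.
Qed.

Lemma sup_leM (E : set R) (x M : R) : E x -> (forall y : R, E y -> y <= M) -> sup E <= M.
Proof. by move=> Ex HM; apply: ge_sup; first by exists x. Qed.

End Conv.

Set Implicit Arguments.
Section Main.
Context {R : realType} {n : nat}.
Notation vec := 'rV[R]_n.

Lemma conv_mono (A B : set vec) : A `<=` B -> conv A `<=` conv B.
Proof. move=> AB x [m [q [l [Aq l0 l1 ->]]]]; exists m, q, l; split => // i; exact: AB. Qed.

Lemma rad_bound (K : set vec) (e c' : vec) (rho : R) : enorm e = 1 ->
  (forall x, K x -> enorm x <= 1) -> 0 <= rho -> cball c' rho `<=` K -> rho <= 2.
Proof.
move=> e1 Kb r0 sub.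
have Kc : K c' by apply: sub; rewrite /cball /= subrr enorm0.
have Kz : K (rho *: e + c') by apply: sub; rewrite /cball /= addrK enormZ e1 mulr1 ger0_norm.
have := enormD (rho *: e + c') (- c'); rewrite addrK enormZ e1 mulr1 ger0_norm // enormN.
have := Kb _ Kc; have := Kb _ Kz; lra.
Qed.

Lemma dist_bound (A : set vec) x y : (forall z, A z -> enorm z <= 1) -> A x -> A y ->
  enorm (x - y) <= 2.
Proof.
move=> H Ax Ay; have := enormD x (- y); rewrite enormN.
have := H _ Ax; have := H _ Ay; lra.
Qed.

Lemma conv_sub' (A B : set vec) : convex_set B -> A `<=` B -> conv A `<=` B.
Proof. move=> cB AB x /(conv_mono AB); exact: conv_sub. Qed.
End Main.
Unset Implicit Arguments.

Theorem corollary5p6 (R : realType) (n : nat) (K : set 'rV[R]_n) (c : 'rV[R]_n)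
  (k : nat) (p : 'I_k -> 'rV[R]_n) :
  convex_body K ->
  is_inball K c (inradius K) ->
  is_circumball K 0 1 ->
  (2 <= k <= n.+1)%N ->
  (forall i, K (p i) /\ usphere (p i)) ->
  conv (range p) 0 ->
  let T' := conv (range p) in
  let C := conv (T' `|` cball c (inradius K)) in
  diam C = Num.max (diam T')
             (\big[Num.max/0]_(i < k) (enorm (p i - c) + inradius C)).
Proof.
move=> [cvxK _ _ [c0 [rho0 [rho0p ball0]]]] [_ inK] [circ _] hk hp _ T' C.
set r := inradius K in inK *.
have k0 : (0 < k)%N by case/andP: hk => h _; exact: (leq_trans _ h).
pose i0 := Ordinal k0.
have pn i : enorm (p i) = 1 by case: (hp i).
have Kb x : K x -> enorm x <= 1 by move=> /circ; rewrite /cball /= subr0.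
have rKmax rho c' : 0 <= rho -> cball c' rho `<=` K -> rho <= r.
  move=> r0 sub; apply: (@sup_ge _ _ _ 2); first by split => //; exists c'.
  by move=> y [y0 [c2 s]]; eapply rad_bound; [exact (pn i0)|exact Kb|exact y0|exact s].
have rpos : 0 < r.
  exact: (lt_le_trans rho0p (rKmax _ _ (ltW rho0p) ball0)).
have TK : T' `<=` K.
  by apply: conv_sub' => // _ [i _ <-]; case: (hp i).
have CK : C `<=` K.
  by apply: conv_sub' => // x [/TK|/inK].
have ballC : cball c r `<=` C by move=> x bx; apply: sub_conv; right.
have TC : T' `<=` C by move=> x tx; apply: sub_conv; left.
have rC : inradius C = r.
  apply/le_anti/andP; split.
    apply: (@sup_leM _ _ r) => [|y [y0 [c' s]]]; first by split; [exact: ltW|exists c].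
    by apply: (rKmax _ c') => // x /s /CK.
  apply: (@sup_ge _ _ _ r) => [|y [y0 [c' s]]]; first by split; [exact: ltW|exists c].
  by apply: (rKmax _ c') => // x /s /CK.
rewrite rC.
have far i : r <= enorm (p i - c).
  rewrite leNgt; apply/negP => lt.
  set t := r - enorm (p i - c).
  have tp : 0 < t by rewrite subr_gt0.
  have Kz : K ((1 + t) *: p i).
    apply: inK; rewrite /cball /= scalerDl scale1r addrAC.
    apply: le_trans (enormD _ _) _; rewrite enormZ pn mulr1 gtr0_norm //.
    rewrite /t; lra.
  have := Kb _ Kz; rewrite enormZ pn mulr1 gtr0_norm; last by lra.
  lra.
have Tb x : T' x -> enorm x <= 1.
  move=> tx; rewrite -[x]subr0; apply: conv_bound tx => _ [i _ <-].
  by rewrite subr0 pn.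
have Cb x : C x -> enorm x <= 1 by move=> /CK /Kb.
set dT := diam T'.
set Mk := \big[Num.max/0]_(i < k) (enorm (p i - c) + r).
have Mki i : enorm (p i - c) + r <= Mk by apply: le_bigmax.
have dTb x y : T' x -> T' y -> enorm (x - y) <= dT.
  move=> tx ty; apply: (@sup_ge _ _ _ 2); first by exists x, y.
  by move=> d [x' [y' [tx' ty' ->]]]; apply: dist_bound Tb tx' ty'.
have Tc x : T' x -> enorm (x - c) <= Mk - r.
  move=> tx; apply: conv_bound tx => _ [i _ <-].
  by have := Mki i; lra.
apply/le_anti/andP; split.
  apply: (@sup_leM _ _ (enorm (c - c))); first by exists c, c; split => //; apply: ballC; rewrite /cball /= subrr enorm0; exact: ltW.
  move=> d [x [y [Cx Cy ->]]].
  move: x Cx; apply: conv_bound => a Aa; rewrite enormB.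
  move: y Cy; apply: conv_bound => b Ab.
  have split3 : enorm (b - a) <= enorm (b - c) + enorm (a - c).
    have -> : b - a = (b - c) + (c - a) by rewrite addrA subrK.
    by apply: le_trans (enormD _ _) _; rewrite [enorm (c - a)]enormB.
  case: Ab => [tb|bb]; case: Aa => [ta|ba].
  - by apply: le_trans (dTb _ _ tb ta) _; rewrite le_max lexx.
  - apply: le_trans split3 _; rewrite le_max; apply/orP; right.
    have := Tc _ tb; move: ba; rewrite /cball /=; rewrite -/r; lra.
  - apply: le_trans split3 _; rewrite le_max; apply/orP; right.
    have := Tc _ ta; move: bb; rewrite /cball /= -/r; lra.
  - apply: le_trans split3 _; rewrite le_max; apply/orP; right.
    have := Mki i0; have := far i0; move: ba bb; rewrite /cball /= -/r; lra.
have dC0 : 0 <= diam C.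
  rewrite -(enorm0 (R:=R) (n:=n)) -(subrr c).
  apply: (@sup_ge _ _ _ 2); first by exists c, c; split => //; apply: ballC; rewrite /cball /= subrr enorm0; exact: ltW.
  by move=> d [x' [y' [tx' ty' ->]]]; apply: dist_bound Cb tx' ty'.
rewrite ge_max; apply/andP; split.
  apply: (@sup_leM _ _ (enorm (p i0 - p i0))).
    by exists (p i0), (p i0); split => //; apply: sub_conv; exists i0.
  move=> d [x [y [tx ty ->]]]; apply: (@sup_ge _ _ _ 2); first by exists x, y; split => //; apply: TC.
  by move=> d' [x' [y' [tx' ty' ->]]]; apply: dist_bound Cb tx' ty'.
apply: bigmax_le => // i _.
set d := enorm (p i - c).
have dp : 0 < d by apply: lt_le_trans rpos (far i).
set u := p i - c.
set w := c - (r / d) *: u.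
have pC : C (p i) by apply: TC; apply: sub_conv; exists i.
have wC : C w.
  apply: ballC; rewrite /cball /= /w addrAC subrr add0r enormN enormZ.
  rewrite -/d ger0_norm; first by rewrite divfK ?gt_eqF.
  by rewrite divr_ge0 // ltW.
have -> : d + r = enorm (p i - w).
  rewrite /w opprB addrCA addrC -/u.
  rewrite -{1}[u]scale1r -scalerDl enormZ ger0_norm; last by rewrite addr_ge0 // divr_ge0 ?ltW.
  by rewrite -/d mulrDl mul1r divfK ?gt_eqF // addrC.
apply: (@sup_ge _ _ _ 2); first by exists (p i), w.
by move=> d' [x' [y' [tx' ty' ->]]]; apply: dist_bound Cb tx' ty'.
Qed.
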